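(* Let $K$ be a valued field with valuation $v_K:K\to\mathbb{T}$, let $M$ be a commutative monoid, and let $I\subseteq K[M]$ be an ideal containing no element of $M$. Let $A$ be the tropicalization of $K[M]/I$, i.e. the quotient of $\mathbb{T}[M]$ by the congruence generated by the bend relations of elements of $I$. Then $A$ has no nontrivial zero-divisors; in particular $A$ is irreducible.
   Context: $\mathbb{T}=\mathbb{R}\cup\{-\infty\}$ with addition $\max$ and multiplication the usual addition, $0_{\mathbb{T}}=-\infty$; $v_K(a)=-\infty$ iff $a=0$. For $f=\sum_i a_i[m_i]\in I$ with the $a_i\neq0$ and distinct $m_i\in M$, the bend relations of $f$ are, for each index $i$, $\sum_j v_K(a_j)[m_j]\sim\sum_{j\neq i}v_K(a_j)[m_j]$ in $\mathbb{T}[M]$. A semiring is irreducible if whenever $xy$ is nilpotent, $x$ or $y$ is nilpotent. *)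

(* Defs.v *)
From HB Require Import structures.
From mathcomp Require Import all_boot all_order all_algebra.
From mathcomp Require Import finmap.
From mathcomp Require Import Rstruct.
From Stdlib Require Reals.
Import Order.TTheory Num.Theory.
Notation R := Rdefinitions.R.

Set Implicit Arguments.
Unset Strict Implicit.
Unset Printing Implicit Defensive.

Import GRing.Theory.
Local Open Scope fset_scope.

(* The tropical semifield  T = R u {-oo}  (None = -oo = 0_T).          *)
Definition trop := option R.

Definition tadd (a b : trop) : trop :=
  match a, b with
  | None, _ => b
  | _, None => a
  | Some x, Some y => Some (Num.max x y)
  end.

Definition tmul (a b : trop) : trop :=
  match a, b with
  | Some x, Some y => Some (x + y)%R
  | _, _ => None
  end.

Definition tle (a b : trop) : Prop :=
  match a, b with
  | None, _ => True
  | Some _, None => False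
  | Some x, Some y => (x <= y)%R
  end.

(* A valuation v_K : K -> T (max convention). *)
Definition valuation (K : fieldType) (v : K -> trop) : Prop :=
  [/\ (forall a : K, v a = None <-> a = 0%R),
      (forall a b : K, v (a * b)%R = tmul (v a) (v b)) &
      (forall a b : K, tle (v (a + b)%R) (tadd (v a) (v b)))].

Section MonoidAlgebras.
Variables (M : choiceType) (e : M) (op : Monoid.com_law e).

Section KM.
Variable K : fieldType.

Definition KM := {fsfun M -> K with 0%R}.

Definition km0 : KM := [fsfun with 0%R].

Definition kmadd (f g : KM) : KM :=
  [fsfun m in finsupp f `|` finsupp g => (f m + g m)%R].

Definition kmmul (f g : KM) : KM :=
  [fsfun m in [fset op x y | x in finsupp f, y in finsupp g] =>
     (\sum_(x <- finsupp f) \sum_(y <- finsupp g | op x y == m) f x * g y)%R].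

Definition kmono (m : M) : KM := [fsfun x in [fset m] => 1%R].

Definition km_ideal (I : KM -> Prop) : Prop :=
  [/\ I km0,
      (forall f g, I f -> I g -> I (kmadd f g)) &
      (forall f g, I g -> I (kmmul f g))].

(* Tropicalization of f = sum_i a_i [m_i]  (a_i <> 0, m_i distinct):
   sum_i v(a_i) [m_i] in T[M]; the m_i are exactly finsupp f. *)
Definition tropf (v : K -> trop) (f : KM) : {fsfun M -> trop with None} :=
  [fsfun m in finsupp f => v (f m)].

Definition tropf_without (v : K -> trop) (f : KM) (i : M)
  : {fsfun M -> trop with None} :=
  [fsfun m in finsupp f `\ i => v (f m)].
End KM.

Definition TM := {fsfun M -> trop with None}.

Definition tm0 : TM := [fsfun with None].

Definition tm1 : TM := [fsfun x in [fset e] => Some (0 : R)%R].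

Definition tmadd (f g : TM) : TM :=
  [fsfun m in finsupp f `|` finsupp g => tadd (f m) (g m)].

Definition tmmul (f g : TM) : TM :=
  [fsfun m in [fset op x y | x in finsupp f, y in finsupp g] =>
     \big[tadd/None]_(x <- finsupp f)
        \big[tadd/None]_(y <- finsupp g | op x y == m) tmul (f x) (g y)].

Definition tmexp (f : TM) (n : nat) : TM := iter n (tmmul f) tm1.

Definition bend_rel (K : fieldType) (v : K -> trop) (I : KM K -> Prop)
  (p q : TM) : Prop :=
  exists f : KM K, exists i : M,
    [/\ I f, i \in finsupp f, p = tropf v f & q = tropf_without v f i].

Inductive cong_gen (R0 : TM -> TM -> Prop) : TM -> TM -> Prop :=
| cg_base p q : R0 p q -> cong_gen R0 p q
| cg_refl p : cong_gen R0 p p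
| cg_sym p q : cong_gen R0 p q -> cong_gen R0 q p
| cg_trans p q r : cong_gen R0 p q -> cong_gen R0 q r -> cong_gen R0 p r
| cg_add p q r s : cong_gen R0 p q -> cong_gen R0 r s ->
    cong_gen R0 (tmadd p r) (tmadd q s)
| cg_mul p q r s : cong_gen R0 p q -> cong_gen R0 r s ->
    cong_gen R0 (tmmul p r) (tmmul q s).

(* Equality in A = T[M] / (congruence generated by bend relations of I):
   two elements of T[M] are identified in A iff they are related. *)
Definition trop_eq (K : fieldType) (v : K -> trop) (I : KM K -> Prop) :
  TM -> TM -> Prop := cong_gen (bend_rel v I).

End MonoidAlgebras.

(* Main.v *)
Require Import Defs.
From HB Require Import structures.
From mathcomp Require Import all_boot all_order all_algebra.
From mathcomp Require Import finmap.
Import GRing.Theory.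
Set Implicit Arguments.
Unset Strict Implicit.
Local Open Scope fset_scope.
Section S.
Variables (M : choiceType) (e : M) (op : Monoid.com_law e).

Lemma tm0E m : tm0 M m = None.
Proof. by rewrite /tm0 fsfunE. Qed.

Lemma tm_eq0 (p : TM M) : p = tm0 M <-> forall m, p m = None.
Proof.
split=> [->|H]; first exact: tm0E.
by apply/fsfunP=> m; rewrite H tm0E.
Qed.

Lemma tadd_None a b : tadd a b = None -> a = None /\ b = None.
Proof. by case: a; case: b. Qed.

Lemma big_tadd_None (I : Type) (s : seq I) (P : pred I) (F : I -> trop) :
  (forall i, P i -> F i = None) -> \big[tadd/None]_(i <- s | P i) F i = None.
Proof. move=> H; apply: (big_rec (fun x => x = None)) => // i x Pi ->; by rewrite H. Qed.

Lemma big_tadd_Some (I : eqType) (s : seq I) (P : pred I) (F : I -> trop) i :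
  i \in s -> P i -> F i <> None -> \big[tadd/None]_(j <- s | P j) F j <> None.
Proof.
elim: s => // a s IH; rewrite inE big_cons => /orP [/eqP <-|Hi] Pi Fi.
  by rewrite Pi => H; case: (tadd_None H).
case: (P a) => //; last exact: IH.
  by move=> H; case: (tadd_None H) => _; exact: IH.
Qed.

Lemma tmaddE (p r : TM M) m : tmadd p r m = tadd (p m) (r m).
Proof.
rewrite /tmadd fsfunE; case: ifP => // /negbT.
rewrite inE negb_or !mem_finsupp !negbK => /andP [/eqP -> /eqP ->] //.
Qed.

Lemma tmadd_eq0 (p r : TM M) : tmadd p r = tm0 M <-> p = tm0 M /\ r = tm0 M.
Proof.
rewrite !tm_eq0; split.
  by move=> H; split=> m; have := H m; rewrite tmaddE => /tadd_None [].
by move=> [H1 H2] m; rewrite tmaddE H1 H2.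
Qed.

Lemma tmmul_eq0 (p r : TM M) : tmmul op p r = tm0 M <-> p = tm0 M \/ r = tm0 M.
Proof.
split.
  move=> H; case: (boolP (finsupp p == fset0)) => [/eqP Hp|].
    by left; apply/tm_eq0 => m; apply/eqP; rewrite -[_ == _]negbK -mem_finsupp Hp.
  case/fset0Pn => x Hx.
  case: (boolP (finsupp r == fset0)) => [/eqP Hr|].
    by right; apply/tm_eq0 => m; apply/eqP; rewrite -[_ == _]negbK -mem_finsupp Hr.
  case/fset0Pn => y Hy; exfalso.
  have := f_equal (fun f : TM M => f (op x y)) H; rewrite tm0E /tmmul fsfunE.
  rewrite in_imfset2 //.
  apply: (@big_tadd_Some _ _ _ _ x) => //.
  apply: (@big_tadd_Some _ _ _ _ y) => //.
  move: Hx Hy; rewrite !mem_finsupp; case: (p x) => // a _; case: (r y) => //.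
move=> H; apply/tm_eq0 => m; rewrite /tmmul fsfunE; case: ifP => // _.
apply: big_tadd_None => x _; apply: big_tadd_None => y _.
by case: H => /tm_eq0 ->; rewrite ?tm0E //; case: (p x).
Qed.

Lemma tm1_neq0 : tm1 e <> tm0 M.
Proof. move/tm_eq0/(_ e); by rewrite /tm1 fsfunE in_fset1 eqxx. Qed.

Lemma tmexp_eq0 (f : TM M) n : tmexp op f n = tm0 M -> (0 < n)%N /\ f = tm0 M.
Proof.
elim: n => [/tm1_neq0 //|n IH] /= /tmmul_eq0 [->//|/IH [] //].
Qed.

Lemma tmexp0 (f : TM M) n : f = tm0 M -> tmexp op f n.+1 = tm0 M.
Proof. by move=> H; apply/tmmul_eq0; left. Qed.

Lemma cong_gen_zero (R0 : TM M -> TM M -> Prop) :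
  (forall p q, R0 p q -> (p = tm0 M <-> q = tm0 M)) ->
  forall p q, cong_gen op R0 p q -> (p = tm0 M <-> q = tm0 M).
Proof.
move=> HR p q; elim => {p q}.
- exact: HR.
- by [].
- by move=> p q _ [].
- by move=> p q r _ [H1 H2] _ [H3 H4]; split => ?; auto.
- move=> p q r s _ [H1 H2] _ [H3 H4]; rewrite !tmadd_eq0; tauto.
- move=> p q r s _ [H1 H2] _ [H3 H4]; rewrite !tmmul_eq0; tauto.
Qed.

Section Bend.
Variables (K : fieldType) (v : K -> trop) (I : KM M K -> Prop).
Hypotheses (Hv : valuation v) (HI : km_ideal op I)
  (Hmono : forall m : M, ~ I (kmono K m)).

Lemma bend_nz p q : bend_rel v I p q -> p <> tm0 M /\ q <> tm0 M.
Proof.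
case: Hv => Hv0 _ _.
case=> f [i [If Hi -> ->]]; split.
  move/tm_eq0/(_ i); rewrite /tropf fsfunE Hi => /Hv0 /eqP.
  by rewrite -[_ == _]negbK -mem_finsupp Hi.
move/tm_eq0 => H.
have f0 : forall m, m != i -> f m = 0%R.
  move=> m mi; apply/eqP; rewrite -[_ == _]negbK -mem_finsupp; apply/negP => Hm.
  have := H m; rewrite /tropf_without fsfunE.
  rewrite in_fsetD1 mi Hm /= => /Hv0 /eqP.
  by rewrite -[_ == _]negbK -mem_finsupp Hm.
set a := f i.
have a0 : a != 0%R by rewrite -mem_finsupp.
pose g : KM M K := [fsfun x in [fset e] => a^-1%R].
have Hg : finsupp g = [fset e].
  apply/fsetP => x; rewrite mem_finsupp /g fsfunE in_fset1.
  by case: (x == e); rewrite ?invr_eq0 ?eqxx.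
have Hf : finsupp f = [fset i].
  apply/fsetP => x; rewrite mem_finsupp in_fset1.
  case: (eqVneq x i) => [->|xi]; first by rewrite /= a0.
  by rewrite f0 // eqxx.
have Hmem : op e i \in [fset op x y | x in [fset e], y in [fset i]].
  by apply/imfset2P; exists e; rewrite ?inE //; exists i; rewrite ?inE.
suff HH : I (kmono K i) by exact: (Hmono HH).
have -> : kmono K i = kmmul op g f.
  apply/fsfunP => m.
  rewrite /kmmul /kmono !fsfunE Hg Hf big_seq_fset1 big_mkcond big_seq_fset1 /=.
  rewrite Monoid.mul1m /g fsfunE !in_fset1 eqxx.
  rewrite Monoid.mul1m in Hmem.
  case: (eqVneq m i) => [->|mi].
    by rewrite Hmem mulVf.
  by case: ifP.
by case: HI => _ _; apply.
Qed.
End Bend.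
End S.

Theorem proposition5p8 (K : fieldType) (v : K -> trop)
  (M : choiceType) (e : M) (op : Monoid.com_law e)
  (I : KM M K -> Prop) :
  valuation v ->
  km_ideal op I ->
  (forall m : M, ~ I (kmono K m)) ->
  (forall p q : TM M,
      trop_eq op v I (tmmul op p q) (tm0 M) ->
      trop_eq op v I p (tm0 M) \/ trop_eq op v I q (tm0 M)) /\
  (forall p q : TM M,
      (exists n : nat, trop_eq op v I (tmexp op (tmmul op p q) n) (tm0 M)) ->
      (exists n : nat, trop_eq op v I (tmexp op p n) (tm0 M)) \/
      (exists n : nat, trop_eq op v I (tmexp op q n) (tm0 M))).
Proof.
move=> Hv HI Hmono.
have Z : forall p q, trop_eq op v I p q -> (p = tm0 M <-> q = tm0 M).
  apply: cong_gen_zero => p q /(bend_nz Hv HI Hmono) [H1 H2]; tauto.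
split.
  move=> p q /Z [_ H].
  have [Hp|Hq] := proj1 (tmmul_eq0 op p q) (H (erefl (tm0 M))).
    by left; rewrite Hp; apply: cg_refl.
  by right; rewrite Hq; apply: cg_refl.
move=> p q [n /Z [_ H]].
have [n0 Hpq] := tmexp_eq0 (H (erefl (tm0 M))).
case: n n0 {H} => // n _.
have [Hp|Hq] := proj1 (tmmul_eq0 op p q) Hpq.
  by left; exists n.+1; rewrite (tmexp0 op n Hp); apply: cg_refl.
by right; exists n.+1; rewrite (tmexp0 op n Hq); apply: cg_refl.
Qed.
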